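(* For every integer $i\ge 1$, $\lim_{k\to\infty}\overline{\alpha}(\{1,2i,k\})=\frac{i}{2i+1}$.
   Context: For a finite set $S$ of positive integers, the distance graph $G(S)$ has vertex set $\mathbb{Z}$, with $i,j$ adjacent iff $|i-j|\in S$. The density of $A\subseteq\mathbb{Z}$ is $\delta(A)=\limsup_{N\to\infty}\frac{|A\cap[-N,N]|}{2N+1}$, and the independence ratio $\overline{\alpha}(S)$ is the supremum of $\delta(A)$ over independent sets $A$ of $G(S)$. *)

(* Defs.v *)
From Stdlib Require Import Reals ZArith List.
From Coquelicot Require Import Coquelicot.
Open Scope R_scope.

(* A finite set S of positive integers is given as a list of naturals.
   Vertices i, j of the distance graph G(S) on Z are adjacent iff |i - j| is in S. *)
Definition adjacent (S : list nat) (x y : Z) : Prop :=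
  In (Z.to_nat (Z.abs (x - y))) S /\ (0 < Z.abs (x - y))%Z.

Definition independent (S : list nat) (A : Z -> bool) : Prop :=
  forall x y : Z, A x = true -> A y = true -> ~ adjacent S x y.

(* |A ∩ [-N, N]| *)
Definition count_in (A : Z -> bool) (N : nat) : nat :=
  length (filter A (map (fun j : nat => (Z.of_nat j - Z.of_nat N)%Z)
                        (seq 0 (2 * N + 1)))).

Definition density (A : Z -> bool) : Rbar :=
  LimSup_seq (fun N => INR (count_in A N) / INR (2 * N + 1)).

Definition indep_ratio (S : list nat) : Rbar :=
  Lub_Rbar (fun r : R => exists A : Z -> bool,
                independent S A /\ density A = Finite r).

(* Main.v *)
Require Import Defs.
From Stdlib Require Import Reals ZArith List Lia Lra.
From Coquelicot Require Import Coquelicot.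
Open Scope R_scope.
Open Scope Z_scope.
Fixpoint cnt (A : Z -> bool) (a : Z) (n : nat) : nat :=
  match n with O => O | S n' => ((if A a then 1 else 0) + cnt A (a+1) n')%nat end.

Lemma cnt_list A s c n :
  length (filter A (map (fun j : nat => (Z.of_nat j - c)%Z) (seq s n))) = cnt A (Z.of_nat s - c) n.
Proof.
  revert s; induction n as [|n IH]; intro s; simpl; [reflexivity|].
  replace ((Z.of_nat s - c + 1)%Z) with ((Z.of_nat (S s) - c)%Z) by lia.
  destruct (A (Z.of_nat s - c)); simpl; rewrite IH; reflexivity.
Qed.

Lemma count_in_cnt A N : count_in A N = cnt A (- Z.of_nat N) (2 * N + 1).
Proof. unfold count_in. rewrite cnt_list. f_equal. Qed.

Lemma cnt_add A a n p : cnt A a (n + p) = (cnt A a n + cnt A (a + Z.of_nat n) p)%nat.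
Proof.
  revert a; induction n as [|n IH]; intro a; simpl.
  - now rewrite Z.add_0_r.
  - rewrite IH. replace (a + 1 + Z.of_nat n)%Z with (a + Z.pos (Pos.of_succ_nat n))%Z by lia. lia.
Qed.

Lemma cnt_S A a n : cnt A a (S n) = ((if A a then 1 else 0) + cnt A (a+1) n)%nat.
Proof. reflexivity. Qed.

Lemma cnt_one A a : cnt A a 1 = (if A a then 1 else 0)%nat.
Proof. simpl. lia. Qed.

Lemma cnt_le A a n : (cnt A a n <= n)%nat.
Proof. revert a; induction n; intro a; simpl; [lia|]. specialize (IHn (a+1)%Z). destruct (A a); lia. Qed.

Lemma cnt_ext A B a n : (forall x, (a <= x < a + Z.of_nat n)%Z -> A x = B x) -> cnt A a n = cnt B a n.
Proof.
  revert a; induction n; intros a H; simpl; [reflexivity|].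
  rewrite (H a) by lia. rewrite (IHn (a+1)%Z); [reflexivity|]. intros x Hx; apply H; lia.
Qed.

Lemma cnt_mono A a n p : (n <= p)%nat -> (cnt A a n <= cnt A a p)%nat.
Proof. intro H. replace p with (n + (p - n))%nat by lia. rewrite cnt_add. lia. Qed.

Section Indep.
Variable A : Z -> bool.
Variable i : nat.
Hypothesis H1 : forall x, A x = true -> A (x + 1)%Z = true -> False.
Hypothesis H2 : forall x, A x = true -> A (x + Z.of_nat (2*i))%Z = true -> False.

Lemma cnt_even a j : (cnt A a (2*j) <= j)%nat.
Proof.
  revert a; induction j; intro a; [simpl; lia|].
  replace (2 * S j)%nat with (S (S (2*j))) by lia. simpl.
  specialize (IHj (a+1+1)%Z). specialize (H1 a).
  simpl in IHj. destruct (A a) eqn:E1, (A (a+1)%Z) eqn:E2; try lia.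
Qed.

Lemma cnt_block a : (1 <= i)%nat -> (cnt A a (2*i+1) <= i)%nat.
Proof.
  intro hi. replace (2*i+1)%nat with (S (2*i)) by lia. rewrite cnt_S.
  destruct (A a) eqn:Ea.
  2:{ pose proof (cnt_even (a+1) i). lia. }
  replace (2*i)%nat with (1 + (2*(i-1)+1))%nat by lia. rewrite !cnt_add, !cnt_one.
  pose proof (cnt_even (a + 1 + Z.of_nat 1) (i-1)).
  replace (a + 1 + Z.of_nat 1 + Z.of_nat (2 * (i - 1)))%Z with (a + Z.of_nat (2*i))%Z by lia.
  destruct (A (a+1)) eqn:E; [exfalso; eauto|].
  destruct (A (a + Z.of_nat (2*i))) eqn:E'; [exfalso; eauto|].
  lia.
Qed.

Lemma cnt_upper a q r : (1 <= i)%nat -> (cnt A a (q*(2*i+1) + r) <= q*i + r)%nat.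
Proof.
  intro hi. revert a; induction q; intro a.
  - simpl. apply cnt_le.
  - replace (S q * (2*i+1) + r)%nat with ((2*i+1) + (q*(2*i+1)+r))%nat by lia.
    rewrite cnt_add. pose proof (cnt_block a hi). specialize (IHq (a + Z.of_nat (2*i+1))%Z). lia.
Qed.
End Indep.

Section Per.
Variable P : Z -> bool.
Variable p : nat.
Hypothesis HP : forall x, P (x + Z.of_nat p)%Z = P x.

Lemma cnt_shift1 a : cnt P (a+1) p = cnt P a p.
Proof.
  pose proof (cnt_add P a p 1). replace (p+1)%nat with (S p) in H by lia.
  simpl in H. rewrite HP in H. simpl in H. lia.
Qed.

Lemma cnt_shift a : cnt P a p = cnt P 0 p.
Proof.
  assert (forall b (t:nat), cnt P (b + Z.of_nat t) p = cnt P b p).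
  { intros b t; induction t. now rewrite Z.add_0_r.
    replace (b + Z.of_nat (S t))%Z with (b + Z.of_nat t + 1)%Z by lia. now rewrite cnt_shift1. }
  destruct (Z_le_dec 0 a).
  - replace a with (0 + Z.of_nat (Z.to_nat a))%Z by lia. apply H.
  - rewrite <- (H a (Z.to_nat (-a))). f_equal; lia.
Qed.

Lemma cnt_mulp a q : cnt P a (q * p) = (q * cnt P 0 p)%nat.
Proof.
  revert a; induction q; intro a; [reflexivity|].
  replace (S q * p)%nat with (p + q*p)%nat by lia. rewrite cnt_add, IHq, cnt_shift. lia.
Qed.

Lemma cnt_lower a n : (0 < p)%nat -> (p * cnt P a n + p * cnt P 0 p >= n * cnt P 0 p)%nat.
Proof.
  intro hp. pose proof (Nat.div_mod n p ltac:(lia)). pose proof (Nat.mod_upper_bound n p ltac:(lia)).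
  pose proof (cnt_mono P a ((n / p) * p) n ltac:(nia)). rewrite cnt_mulp in H1.
  nia.
Qed.
End Per.
Definition Podd (x : Z) : bool := (x mod 2 =? 1).
Definition Bset (n : Z) (x : Z) : bool := ((x mod n) mod 2 =? 1).
Definition Aset (m L n : Z) (x : Z) : bool :=
  ((x mod m) <? L) && (((x mod m) mod n) mod 2 =? 1).

Lemma cnt_odd a j : cnt Podd a (2*j) = j.
Proof.
  revert a; induction j; intro a; [reflexivity|].
  replace (2 * S j)%nat with (S (S (2*j))) by lia. rewrite !cnt_S, IHj.
  unfold Podd. pose proof (Z.div_mod a 2 ltac:(lia)). pose proof (Z.div_mod (a+1) 2 ltac:(lia)).
  pose proof (Z.mod_pos_bound a 2 ltac:(lia)). pose proof (Z.mod_pos_bound (a+1) 2 ltac:(lia)).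
  destruct (Z.eqb_spec (a mod 2) 1), (Z.eqb_spec ((a+1) mod 2) 1); lia.
Qed.

Lemma cnt_B0 i : cnt (Bset (Z.of_nat (2*i+1))) 0 (2*i+1) = i.
Proof.
  rewrite (cnt_ext _ Podd).
  - rewrite cnt_add, cnt_odd, cnt_one. unfold Podd.
    replace ((0 + Z.of_nat (2 * i)) mod 2) with 0 by (rewrite Nat2Z.inj_mul, Z.add_0_l, Z.mul_comm; symmetry; apply Z_mod_mult). simpl. lia.
  - intros x Hx. unfold Bset, Podd. rewrite (Z.mod_small x) by lia. reflexivity.
Qed.

Lemma B_per n x : n > 0 -> Bset n (x + n) = Bset n x.
Proof. intro. unfold Bset. replace (x + n) with (x + 1 * n) by ring. now rewrite Z_mod_plus_full. Qed.

Lemma A_per m L n x : m > 0 -> Aset m L n (x + m) = Aset m L n x.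
Proof. intro. unfold Aset. replace (x + m) with (x + 1 * m) by ring. now rewrite Z_mod_plus_full. Qed.

Lemma c0_bound i m L : (1 <= i)%nat -> (L <= m)%nat ->
  ((2*i+1) * cnt (Aset (Z.of_nat m) (Z.of_nat L) (Z.of_nat (2*i+1))) 0 m + (2*i+1)*i >= L*i)%nat.
Proof.
  intros hi hL.
  pose proof (cnt_lower (Bset (Z.of_nat (2*i+1))) (2*i+1) (fun x => B_per (Z.of_nat (2*i+1)) x ltac:(lia)) 0 L ltac:(lia)).
  rewrite cnt_B0 in H.
  pose proof (cnt_mono (Aset (Z.of_nat m) (Z.of_nat L) (Z.of_nat (2*i+1))) 0 L m hL).
  rewrite (cnt_ext (Aset (Z.of_nat m) (Z.of_nat L) (Z.of_nat (2*i+1))) (Bset (Z.of_nat (2*i+1)))) in H0.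
  - nia.
  - intros x Hx. unfold Aset, Bset. rewrite Z.mod_small by lia.
    replace (x <? Z.of_nat L) with true by (symmetry; apply Z.ltb_lt; lia). reflexivity.
Qed.

Lemma prod_cases n t : n > 0 ->
  (t = 0 /\ n*t = 0) \/ (t = 1 /\ n*t = n) \/ n*t >= 2*n \/ (t = -1 /\ n*t = -n) \/ n*t <= -2*n.
Proof.
  intro. assert (t <= -2 \/ t = -1 \/ t = 0 \/ t = 1 \/ t >= 2) as [?|[?|[?|[?|?]]]] by lia;
  subst; try nia.
Qed.

Lemma core1 m n L u v t d : n > 0 -> L + n <= m -> 0 <= u < L -> 0 <= v < L ->
  m*t + (u - v) = d -> (d = 1 \/ d = -1 \/ d = n-1 \/ d = -(n-1) \/ d = m-1 \/ d = -(m-1)) ->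
  (u - v = 1 \/ u - v = -1 \/ u - v = n-1 \/ u - v = -(n-1)).
Proof. intros. destruct (prod_cases m t ltac:(lia)) as [?|[?|[?|[?|?]]]]; lia. Qed.

Lemma core2 n a b s1 s2 : n >= 3 -> 0 <= 2*s1+1 < n -> 0 <= 2*s2+1 < n ->
  let u := n*a + (2*s1+1) in let v := n*b + (2*s2+1) in
  (u - v = 1 \/ u - v = -1 \/ u - v = n-1 \/ u - v = -(n-1)) -> False.
Proof.
  intros. subst u v. assert (n*a - n*b = n*(a-b)) by ring.
  destruct (prod_cases n (a-b) ltac:(lia)) as [?|[?|[?|[?|?]]]]; lia.
Qed.

Lemma A_indep i k : (1 <= i)%nat -> (2*i <= k)%nat ->
  independent (1%nat :: (2*i)%nat :: k :: nil)
    (Aset (Z.of_nat (k+1)) (Z.of_nat (k - 2*i)) (Z.of_nat (2*i+1))).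
Proof.
  intros hi hk x y Hx Hy [Hin Hpos].
  set (m := Z.of_nat (k+1)) in *. set (L := Z.of_nat (k - 2*i)) in *. set (n := Z.of_nat (2*i+1)) in *.
  unfold Aset in Hx, Hy. apply andb_prop in Hx, Hy. destruct Hx as [Hx1 Hx2], Hy as [Hy1 Hy2].
  rewrite Z.ltb_lt in Hx1, Hy1. rewrite Z.eqb_eq in Hx2, Hy2.
  assert (Hm : m > 0) by lia. assert (Hn : n >= 3) by lia.
  pose proof (Z.div_mod x m ltac:(lia)). pose proof (Z.div_mod y m ltac:(lia)).
  pose proof (Z.mod_pos_bound x m ltac:(lia)). pose proof (Z.mod_pos_bound y m ltac:(lia)).
  set (u := x mod m) in *. set (v := y mod m) in *.
  assert (Hd : m * (x/m - y/m) + (u - v) = x - y) by lia.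
  assert (Hdc : x - y = 1 \/ x - y = -1 \/ x - y = n-1 \/ x - y = -(n-1) \/ x - y = m-1 \/ x - y = -(m-1)).
  { simpl in Hin. destruct Hin as [Hq|[Hq|[Hq|Hq]]]; [..|contradiction]; subst m n; lia. }
  pose proof (core1 m n L u v _ _ ltac:(lia) ltac:(subst m n L; lia) ltac:(lia) ltac:(lia) Hd Hdc) as Huv.
  pose proof (Z.div_mod u n ltac:(lia)). pose proof (Z.div_mod v n ltac:(lia)).
  pose proof (Z.mod_pos_bound u n ltac:(lia)). pose proof (Z.mod_pos_bound v n ltac:(lia)).
  set (s := u mod n) in *. set (s' := v mod n) in *.
  pose proof (Z.div_mod s 2 ltac:(lia)). pose proof (Z.div_mod s' 2 ltac:(lia)).
  apply (core2 n (u/n) (v/n) (s/2) (s'/2) Hn); cbv zeta; lia.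
Qed.
Close Scope Z_scope.
Open Scope R_scope.
Lemma arch (x : R) : exists N : nat, x < INR N.
Proof.
  destruct (nfloor_ex (Rmax 0 x) (Rmax_l 0 x)) as [n Hn].
  exists (S n). rewrite S_INR. pose proof (Rmax_r 0 x). lra.
Qed.

Lemma small_eventually (C eps : R) : 0 < eps ->
  exists N0 : nat, forall N, (N0 <= N)%nat -> C / INR (2*N+1) <= eps.
Proof.
  intro He. destruct (arch (C/eps)) as [N0 HN0]. exists N0. intros N HN.
  assert (HM : 0 < INR (2*N+1)) by (apply lt_0_INR; lia).
  apply Rle_div_l; [lra|].
  apply le_INR in HN. assert (INR N <= INR (2*N+1)) by (apply le_INR; lia).
  pose proof (Rlt_le _ _ (proj1 (Rlt_div_l C (INR N0) eps ltac:(lra)) HN0)). nra.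
Qed.

Lemma limsup_upper (u : nat -> R) (c C : R) :
  (forall N, u N <= c + C / INR (2*N+1)) -> Rbar_le (LimSup_seq u) c.
Proof.
  intro H.
  assert (Heps : forall eps, 0 < eps -> Rbar_le (LimSup_seq u) (c + eps)).
  { intros eps He. rewrite <- (LimSup_seq_const (c+eps)). apply LimSup_le.
    destruct (small_eventually C eps He) as [N0 HN0]. exists N0. intros N HN.
    specialize (H N). specialize (HN0 N HN). lra. }
  destruct (LimSup_seq u) as [l| |] eqn:E.
  - simpl. apply Rle_plus_epsilon. intros eps He. exact (Heps eps He).
  - specialize (Heps 1 Rlt_0_1). simpl in Heps. contradiction.
  - simpl. exact I.
Qed.

Lemma limsup_lower (u : nat -> R) (c C : R) :
  (forall N, c - C / INR (2*N+1) <= u N) -> Rbar_le c (LimSup_seq u).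
Proof.
  intro H.
  assert (Heps : forall eps, 0 < eps -> Rbar_le (c - eps) (LimSup_seq u)).
  { intros eps He. rewrite <- (LimSup_seq_const (c-eps)). apply LimSup_le.
    destruct (small_eventually C eps He) as [N0 HN0]. exists N0. intros N HN.
    specialize (H N). specialize (HN0 N HN). lra. }
  destruct (LimSup_seq u) as [l| |] eqn:E.
  - simpl. apply Rle_plus_epsilon. intros eps He. specialize (Heps eps He). simpl in Heps. lra.
  - simpl. exact I.
  - specialize (Heps 1 Rlt_0_1). simpl in Heps. contradiction.
Qed.

Lemma ratio_le (c M n a b : R) : 0 < M -> 0 < n -> n*c <= a*M + n*b -> c/M <= a/n + b/M.
Proof.
  intros HM Hn H. unfold Rdiv.
  assert (HiM : M * / M = 1) by (field; lra). assert (Hin : n * / n = 1) by (field; lra).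
  assert (0 < / M) by (apply Rinv_0_lt_compat; lra). assert (0 < / n) by (apply Rinv_0_lt_compat; lra).
  assert (H' : n*c*(/M * /n) <= (a*M + n*b) * (/M * /n)) by (apply Rmult_le_compat_r; nra).
  replace (n*c*(/M * /n)) with (c * /M) in H' by (field; lra).
  replace ((a*M + n*b) * (/M * /n)) with (a * /n + b * /M) in H' by (field; lra). exact H'.
Qed.

Lemma ratio_ge (c0 cn M m : R) : 0 < M -> 0 < m -> M*c0 <= m*cn + m*c0 -> c0/m - c0/M <= cn/M.
Proof.
  intros HM Hm H.
  assert (0 < / M) by (apply Rinv_0_lt_compat; lra). assert (0 < / m) by (apply Rinv_0_lt_compat; lra).
  assert (H' : M*c0*(/M * /m) <= (m*cn + m*c0) * (/M * /m)) by (apply Rmult_le_compat_r; nra).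
  replace (M*c0*(/M * /m)) with (c0/m) in H' by (field; lra).
  replace ((m*cn + m*c0) * (/M * /m)) with (cn/M + c0/M) in H' by (field; lra). lra.
Qed.

Lemma indep_upper i k A : (1 <= i)%nat -> independent (1%nat :: (2*i)%nat :: k :: nil) A ->
  Rbar_le (density A) (INR i / INR (2*i+1)).
Proof.
  intros hi HA. unfold density. apply limsup_upper with (C := INR (2*i)). intro N.
  rewrite count_in_cnt.
  assert (H1 : forall x, A x = true -> A (x + 1)%Z = true -> False).
  { intros x Hx Hy. apply (HA x (x+1)%Z Hx Hy). split; [|lia].
    replace (Z.to_nat (Z.abs (x - (x + 1)))) with 1%nat by lia. left; reflexivity. }
  assert (H2 : forall x, A x = true -> A (x + Z.of_nat (2*i))%Z = true -> False).
  { intros x Hx Hy. apply (HA x (x + Z.of_nat (2*i))%Z Hx Hy). split; [|lia].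
    replace (Z.to_nat (Z.abs (x - (x + Z.of_nat (2*i))))) with (2*i)%nat by lia. right; left; reflexivity. }
  pose proof (Nat.div_mod (2*N+1) (2*i+1) ltac:(lia)) as Hdm.
  pose proof (Nat.mod_upper_bound (2*N+1) (2*i+1) ltac:(lia)) as Hmb.
  pose proof (cnt_upper A i H1 H2 (- Z.of_nat N) ((2*N+1)/(2*i+1)) ((2*N+1) mod (2*i+1)) hi) as Hc.
  replace ((2 * N + 1) / (2 * i + 1) * (2 * i + 1) + (2 * N + 1) mod (2 * i + 1))%nat
    with (2*N+1)%nat in Hc by lia.
  set (c := cnt A (- Z.of_nat N) (2 * N + 1)) in *.
  assert (Hn : ((2*i+1) * c <= i * (2*N+1) + (2*i+1)*(2*i))%nat) by nia.
  apply ratio_le; [apply lt_0_INR; lia | apply lt_0_INR; lia |].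
  rewrite <- !mult_INR, <- plus_INR. apply le_INR. lia.
Qed.

Lemma real_ineq (ri rk rc : R) : 0 <= ri -> 0 <= rk ->
  (rk - 2 * ri) * ri <= (2*ri+1) * rc + (2*ri+1) * ri ->
  ri / (2*ri+1) - (2*ri) / (rk+1) <= rc / (rk+1).
Proof.
  intros H1 H2 H.
  assert (E : rc / (rk+1) - (ri / (2*ri+1) - (2*ri) / (rk+1)) =
     ((2*ri+1)*rc - ri*(rk+1) + 2*ri*(2*ri+1)) / ((2*ri+1)*(rk+1))) by (field; lra).
  assert (0 <= ((2*ri+1)*rc - ri*(rk+1) + 2*ri*(2*ri+1)) / ((2*ri+1)*(rk+1))).
  { apply Rdiv_le_0_compat; nra. }
  lra.
Qed.

Lemma A_lower i k : (1 <= i)%nat -> (2*i <= k)%nat ->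
  exists r, density (Aset (Z.of_nat (k+1)) (Z.of_nat (k - 2*i)) (Z.of_nat (2*i+1))) = Finite r /\
   INR i / INR (2*i+1) - INR (2*i) / INR (k+1) <= r /\ r <= INR i / INR (2*i+1).
Proof.
  intros hi hk.
  set (A := Aset (Z.of_nat (k+1)) (Z.of_nat (k - 2*i)) (Z.of_nat (2*i+1))).
  set (c0 := cnt A 0 (k+1)).
  assert (Hup := indep_upper i k A hi (A_indep i k hi hk)).
  assert (Hlo : Rbar_le (INR c0 / INR (k+1)) (density A)).
  { unfold density. apply limsup_lower with (C := INR c0). intro N. rewrite count_in_cnt.
    pose proof (cnt_lower A (k+1) (fun x => A_per (Z.of_nat (k+1)) (Z.of_nat (k - 2*i)) (Z.of_nat (2*i+1)) x ltac:(lia)) (- Z.of_nat N) (2*N+1) ltac:(lia)) as Hc.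
    fold c0 in Hc.
    apply ratio_ge; [apply lt_0_INR; lia | apply lt_0_INR; lia |].
    rewrite <- !mult_INR, <- plus_INR. apply le_INR. lia. }
  assert (Hc0 : INR i / INR (2*i+1) - INR (2*i) / INR (k+1) <= INR c0 / INR (k+1)).
  { pose proof (c0_bound i (k+1) (k-2*i) hi ltac:(lia)) as Hb. fold A c0 in Hb.
    assert (Hb' : INR (k - 2*i) * INR i <= INR (2*i+1) * INR c0 + INR (2*i+1) * INR i).
    { rewrite <- !mult_INR, <- plus_INR. apply le_INR. lia. }
    rewrite minus_INR in Hb' by lia. rewrite !plus_INR, !mult_INR in *.
    replace (INR 2) with 2 in * by reflexivity. replace (INR 1) with 1 in * by reflexivity.
    apply real_ineq; [apply pos_INR | apply pos_INR | exact Hb']. }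
  destruct (density A) as [r| |] eqn:E; cbn [Rbar_le] in Hup, Hlo.
  - exists r. repeat split; lra.
  - contradiction.
  - contradiction.
Qed.

Lemma ratio_bounds i k : (1 <= i)%nat -> (2*i <= k)%nat ->
  exists v, indep_ratio (1%nat :: (2*i)%nat :: k :: nil) = Finite v /\
   INR i / INR (2*i+1) - INR (2*i) / INR (k+1) <= v /\ v <= INR i / INR (2*i+1).
Proof.
  intros hi hk. destruct (A_lower i k hi hk) as [r [Hd [H1 H2]]].
  unfold indep_ratio.
  match goal with |- context [Lub_Rbar ?E] => destruct (Lub_Rbar_correct E) as [Hub Hleast] end.
  assert (Hr := Hub r (ex_intro _ _ (conj (A_indep i k hi hk) Hd))).
  assert (HU : Rbar_le (Lub_Rbar (fun r : R => exists A : Z -> bool,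
                independent (1%nat :: (2*i)%nat :: k :: nil) A /\ density A = Finite r))
               (INR i / INR (2*i+1))).
  { apply Hleast. intros x [A [HA HdA]]. rewrite <- HdA. apply (indep_upper i k A hi HA). }
  destruct (Lub_Rbar _) as [v| |]; cbn [Rbar_le] in Hr, HU; try contradiction.
  exists v. repeat split; lra.
Qed.

Theorem theorem24 (i : nat) (hi : (1 <= i)%nat) :
  is_lim_seq (fun k : nat => real (indep_ratio (1%nat :: (2 * i)%nat :: k :: nil)))
             (INR i / INR (2 * i + 1)).
Proof.
  apply is_lim_seq_spec. intro eps. destruct eps as [eps He]. cbn [pos].
  destruct (arch (INR (2*i) / eps)) as [N1 HN1].
  exists (Nat.max (2*i) N1). intros k Hk.
  destruct (ratio_bounds i k hi ltac:(lia)) as [v [Ev [Hv1 Hv2]]]. rewrite Ev. cbn [real].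
  assert (Hk1 : INR N1 <= INR (k+1)) by (apply le_INR; lia).
  assert (Hsmall : INR (2*i) / INR (k+1) < eps).
  { apply Rlt_div_l; [apply lt_0_INR; lia|].
    apply Rlt_div_l in HN1; [|lra]. nra. }
  rewrite Rabs_left1 by lra. lra.
Qed.
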